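(* Let $G=(V,E,w_G)$ be a directed graph with non-negative integer edge weights, $n=|V|$, let $s\in V$ be a source node, and let $h$ be an integer with $1\le h\le n$. Consider the following procedure. Step 1: Let $C\subseteq V$ be a set of skeleton nodes containing $s$ and such that, for every pair of nodes $u,v$ for which the shortest path from $u$ to $v$ in $G$ consists of exactly $\lceil h/2\rceil$ nodes, $C$ contains at least one node of one of these shortest paths. Step 2: For each $x\in C$ compute estimates $\tilde d(x,\cdot)$ with $\mathrm{dist}_G(x,v)\le \tilde d(x,v)\le 2\,\mathrm{dist}^h_G(x,v)$ for every $v\in V$. Step 3: Let $H=(C,C^2,w_H)$ be the complete directed graph on $C$ with $w_H(x,y)=\tilde d(x,y)$. Step 4: Compute $\mathrm{dist}_H(s,x)$ for every $x\in C$. Step 5: Let $G'=(V,E\cup(\{s\}\times C),w_{G'})$ where $w_{G'}(u,v)=\mathrm{dist}_H(u,v)$ for $(u,v)\in(\{s\}\times C)\setminus E$, $w_{G'}(u,v)=2w_G(u,v)$ for $(u,v)\in E\setminus(\{s\}\times C)$, and $w_{G'}(u,v)=\min(\mathrm{dist}_H(u,v),2w_G(u,v))$ for $(u,v)\in E\cap(\{s\}\times C)$. Step 6: Return $\hat d(s,v):=\tfrac12\,\mathrm{dist}^h_{G'}(s,v)$ for every $v\in V$. Then for every node $v\in V$, $\tfrac12\,\mathrm{dist}_G(s,v)\le \hat d(s,v)\le \mathrm{dist}_G(s,v)$, and for every edge $(u,v)\in E$, $\hat d(s,v)\le \hat d(s,u)+w_G(u,v)$.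
   Context: For a weighted directed graph, $\mathrm{dist}(u,v)$ denotes the minimum weight of a directed path from $u$ to $v$. For an integer $h\ge1$, the $h$-hop distance $\mathrm{dist}^h(u,v)$ is the minimum weight among all directed paths from $u$ to $v$ with at most $h$ edges. *)

(* Defs.v *)
From HB Require Import structures.
From mathcomp Require Import all_boot all_order all_algebra.
From mathcomp Require Export constructive_ereal.
Set Implicit Arguments. Unset Strict Implicit. Unset Printing Implicit Defensive.
Import Order.TTheory GRing.Theory Num.Theory.
Local Open Scope ring_scope.
Local Open Scope ereal_scope.

(* A weighted directed graph on a finite vertex type V is given by an edge
   relation e : rel V and a weight function wt : V -> V -> \bar rat (only
   the values on edges matter).  Distances live in \bar rat, +oo meaning
   "no path". *)

Section Defs.
Variable V : finType.

Fixpoint pweight (wt : V -> V -> \bar rat) (x : V) (p : seq V) : \bar rat :=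
  match p with
  | [::] => 0
  | y :: p' => wt x y + pweight wt y p'
  end.

(* u :: p is a (simple) directed path from u to v; it has size p edges and
   (size p).+1 nodes *)
Definition is_spath (e : rel V) (u : V) (p : seq V) (v : V) : bool :=
  [&& path e u p, uniq (u :: p) & last u p == v].

Definition hdist (e : rel V) (wt : V -> V -> \bar rat) (h : nat) (u v : V)
  : \bar rat :=
  \big[Order.min/+oo]_(k < h.+1)
    \big[Order.min/+oo]_(p : k.-tuple V | is_spath e u p v) pweight wt u p.

(* distance: a simple path has fewer than #|V| edges *)
Definition gdist (e : rel V) (wt : V -> V -> \bar rat) (u v : V) : \bar rat :=
  hdist e wt #|V| u v.

Definition is_shortest (e : rel V) (wt : V -> V -> \bar rat) (u : V)
  (p : seq V) (v : V) : Prop :=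
  is_spath e u p v /\ pweight wt u p = gdist e wt u v.

Definition natw (w : V -> V -> nat) : V -> V -> \bar rat :=
  fun x y => ((w x y)%:R : rat)%:E.

Definition skeleton_ok (e : rel V) (wt : V -> V -> \bar rat) (h : nat)
  (C : {set V}) : Prop :=
  forall u v : V,
    (exists p : seq V, is_shortest e wt u p v /\ (size p).+1 = uphalf h) ->
    exists p : seq V, [/\ is_shortest e wt u p v, (size p).+1 = uphalf h
                        & has (fun x => x \in C) (u :: p)].

Definition H_edge (C : {set V}) : rel V := fun x y => (x \in C) && (y \in C).
Definition distH (C : {set V}) (dt : V -> V -> \bar rat) (x y : V) :=
  gdist (H_edge C) dt x y.

Definition G'_edge (e : rel V) (s : V) (C : {set V}) : rel V :=
  fun x y => e x y || ((x == s) && (y \in C)).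
Definition G'_weight (e : rel V) (w : V -> V -> nat) (s : V) (C : {set V})
  (dt : V -> V -> \bar rat) : V -> V -> \bar rat :=
  fun x y =>
    if (x == s) && (y \in C) then
      (if e x y then Order.min (distH C dt x y) (2%:E * natw w x y)
       else distH C dt x y)
    else 2%:E * natw w x y.

Definition dhat (e : rel V) (w : V -> V -> nat) (s : V) (C : {set V})
  (dt : V -> V -> \bar rat) (h : nat) (v : V) : \bar rat :=
  (2^-1)%:E * hdist (G'_edge e s C) (G'_weight e w s C dt) h s v.

End Defs.

(* Main.v *)
Require Import Defs.
From HB Require Import structures.
From mathcomp Require Import all_boot all_order all_algebra.
From mathcomp Require Import constructive_ereal zify.
Import Order.TTheory GRing.Theory Num.Theory.
Local Open Scope ring_scope.
Local Open Scope ereal_scope.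
Set Implicit Arguments. Unset Strict Implicit. Unset Printing Implicit Defensive.
Section Gen.
Variable V : finType.
Variables (e : rel V) (wt : V -> V -> \bar rat).

Lemma pweight_cat x p1 p2 :
  pweight wt x (p1 ++ p2) = pweight wt x p1 + pweight wt (last x p1) p2.
Proof.
elim: p1 x => [|y p IH] x /=; first by rewrite add0e.
by rewrite IH addeA.
Qed.

Lemma hdist_spath h u p v : is_spath e u p v -> (size p <= h)%N ->
  hdist e wt h u v <= pweight wt u p.
Proof.
move=> sp sh; rewrite /hdist.
pose k : 'I_h.+1 := Ordinal (sh : (size p < h.+1)%N).
apply: le_trans (bigmin_le _ k _) _.
exact: (bigmin_le_cond _ (j := in_tuple p)).
Qed.

Lemma hdist_wit h u v : hdist e wt h u v = +oo \/
  exists p, [/\ is_spath e u p v, (size p <= h)%N & pweight wt u p = hdist e wt h u v].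
Proof.
rewrite /hdist.
set K := fun x => x = +oo \/ exists p, [/\ is_spath e u p v, (size p <= h)%N & pweight wt u p = x].
have Kmin : forall x y, K x -> K y -> K (Order.min x y).
  by move=> x y Kx Ky; rewrite minEle; case: ifP.
apply: (big_ind K); [by left | exact: Kmin | move=> k _].
apply: (big_ind K); [by left | exact: Kmin | move=> t st].
right; exists (val t); split => //.
by rewrite size_tuple -ltnS.
Qed.

Hypothesis wnn : forall x y, e x y -> 0 <= wt x y.

Lemma pweight_ge0 x p : path e x p -> 0 <= pweight wt x p.
Proof.
elim: p x => [|y p IH] x //= /andP[exy pp].
by rewrite adde_ge0 ?wnn ?IH.
Qed.

Lemma shortcut x p : path e x p -> exists q, [/\ path e x q, uniq (x :: q),
  last x q = last x p, (size q <= size p)%N & pweight wt x q <= pweight wt x p].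
Proof.
elim: p x => [|y p IH] x /=.
  by move=> _; exists [::].
move=> /andP[exy pp]; have [q [pq uq lq sq wq]] := IH y pp.
have pr : path e x (y :: q) by rewrite /= exy.
have ur : uniq (y :: q) by [].
have lr : last x (y :: q) = last y p by [].
have sr : (size (y :: q) <= (size p).+1)%N by [].
have wr : pweight wt x (y :: q) <= wt x y + pweight wt y p by rewrite /= leeD2l.
case xin: (x \in y :: q); last first.
  by exists (y :: q); split => //; rewrite /= -/(uniq (y :: q)) ur andbT xin.
move: (y :: q) pr ur lr sr wr xin => r pr ur lr sr wr xin.
case/splitPr: xin pr ur lr sr wr => p1 p2.
rewrite cat_path /= => /and3P[pp1 ex pp2].
rewrite cat_uniq /= => /and4P[_ _ xp2 up2].
rewrite last_cat /= => lr.
rewrite size_cat /= => sr.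
rewrite pweight_cat /= => wr.
exists p2; split => //.
- by rewrite /= xp2.
- by apply: leq_trans sr; rewrite -addSnnS leq_addl.
apply: le_trans wr.
have h1 := pweight_ge0 pp1.
have h2 := wnn ex.
rewrite addeA -[X in X <= _]add0e leeD2r //.
exact: adde_ge0.
Qed.

Lemma hdist_walk h u p v : path e u p -> last u p = v -> (size p <= h)%N ->
  hdist e wt h u v <= pweight wt u p.
Proof.
move=> pp lp sp; have [q [pq uq lq sq wq]] := shortcut pp.
apply: le_trans wq; apply: hdist_spath; last exact: leq_trans sp.
by rewrite /is_spath pq uq lq lp eqxx.
Qed.

Lemma gdist_walk u p v : path e u p -> last u p = v ->
  gdist e wt u v <= pweight wt u p.
Proof.
move=> pp lp; have [q [pq uq lq sq wq]] := shortcut pp.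
apply: le_trans wq; apply: hdist_spath.
  by rewrite /is_spath pq uq lq lp eqxx.
have := max_card (mem (u :: q)); rewrite (card_uniqP uq) /=.
by move=> /ltnW.
Qed.

Lemma hdist_ge0 h u v : 0 <= hdist e wt h u v.
Proof.
case: (hdist_wit h u v) => [->|[p [/and3P[pp _ _] _ <-]]]; first by rewrite leey.
exact: pweight_ge0.
Qed.

Lemma hdist_self h u : hdist e wt h u u <= 0.
Proof.
by apply: (@le_trans _ _ (pweight wt u [::])) => //; apply: hdist_spath => //;
  rewrite /is_spath /= eqxx.
Qed.

Lemma gdist_tri x y z : gdist e wt x z <= gdist e wt x y + gdist e wt y z.
Proof.
case: (hdist_wit #|V| x y) => [E1|[p1 [/and3P[pp1 _ /eqP lp1] _ w1]]].
  rewrite /gdist E1 addye ?leey //.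
  by apply/eqP => E; have := hdist_ge0 #|V| y z; rewrite /gdist in E; rewrite E.
case: (hdist_wit #|V| y z) => [E2|[p2 [/and3P[pp2 _ /eqP lp2] _ w2]]].
  rewrite /gdist E2 addey ?leey //.
  by apply/eqP => E; have := hdist_ge0 #|V| x y; rewrite /gdist in E; rewrite E.
rewrite /gdist -w1 -w2 -lp1 -pweight_cat; apply: gdist_walk.
  by rewrite cat_path pp1 lp1 pp2.
by rewrite last_cat lp1.
Qed.
Lemma hdist_lb h u v B :
  (forall p, is_spath e u p v -> (size p <= h)%N -> B <= pweight wt u p) ->
  B <= hdist e wt h u v.
Proof.
move=> H; case: (hdist_wit h u v) => [->|[p [sp sz <-]]]; first by rewrite leey.
exact: H.
Qed.
End Gen.


Section G1.
Variable V : finType.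
Variables (E : rel V) (w : V -> V -> nat).

Lemma natw_ge0 x y : 0 <= natw w x y.
Proof. by rewrite /natw lee_fin ler0n. Qed.

Lemma pw_fin x p : pweight (natw w) x p \is a fin_num.
Proof. by elim: p x => [|y p IH] x //=; rewrite fin_numD IH andbT. Qed.

Lemma Ewnn : forall x y, E x y -> 0 <= natw w x y.
Proof. by move=> x y _; apply: natw_ge0. Qed.

Lemma d_ge0 x y : 0 <= gdist E (natw w) x y.
Proof. exact: (hdist_ge0 Ewnn). Qed.

Lemma spath_split (e : rel V) x q1 q2 y : is_spath e x (q1 ++ q2) y ->
  is_spath e x q1 (last x q1) /\ is_spath e (last x q1) q2 y.
Proof.
rewrite /is_spath cat_path last_cat => /and3P[/andP[p1 p2] u l].
rewrite p1 p2 l eqxx !andbT /=; split.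
  by move: u; rewrite -cat_cons cat_uniq => /andP[].
by move: u; rewrite -cat_cons lastI cat_rcons cat_uniq => /and3P[_ _].
Qed.

Lemma shortest_split x q1 q2 y : is_shortest E (natw w) x (q1 ++ q2) y ->
  is_shortest E (natw w) x q1 (last x q1) /\
  is_shortest E (natw w) (last x q1) q2 y.
Proof.
move=> [sp wp]; have [s1 s2] := spath_split sp.
move: (s1) (s2) => /and3P[p1 _ /eqP l1] /and3P[p2 _ /eqP l2].
have d1 := gdist_walk Ewnn p1 l1.
have d2 := gdist_walk Ewnn p2 l2.
have tri := gdist_tri Ewnn x (last x q1) y.
move: wp; rewrite pweight_cat => wp.
have f1 := pw_fin x q1; have f2 := pw_fin (last x q1) q2.
split; split => //; apply/le_anti; rewrite ?d1 ?d2 ?andbT.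
- rewrite -(leeD2rE _ _ f2) wp (le_trans tri) //.
  by rewrite leeD2l.
- rewrite -(leeD2lE _ _ f1) wp (le_trans tri) //.
  by rewrite leeD2r.
Qed.
End G1.

Section Main.
Variables (V : finType) (E : rel V) (w : V -> V -> nat) (s : V) (h : nat)
  (C : {set V}) (dt : V -> V -> \bar rat).
Hypotheses (h1 : (1 <= h)%N) (sC : s \in C) (sk : skeleton_ok E (natw w) h C)
  (dtb : forall x v, x \in C -> gdist E (natw w) x v <= dt x v /\
                        dt x v <= 2%:E * hdist E (natw w) h x v).

Local Notation d := (gdist E (natw w)).
Local Notation dH := (distH C dt).
Local Notation pw := (pweight (natw w)).
Local Notation Ew := (@Ewnn V E w).

Lemma hT : (1 <= uphalf h <= h)%N.
Proof. by rewrite uphalfE half_gt0 ltnS h1 leq_half_double; lia. Qed.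

Lemma Hwnn x y : H_edge C x y -> 0 <= dt x y.
Proof. by move=> /andP[xC _]; apply: le_trans (dtb y xC).1; apply: d_ge0. Qed.

Lemma mul2_le (a b : \bar rat) : a <= b -> 2%:E * a <= 2%:E * b.
Proof. by move=> ab; rewrite lee_pmul2l. Qed.

Lemma mul2D (a b : \bar rat) : 0 <= a -> 0 <= b -> 2%:E * (a + b) = 2%:E * a + 2%:E * b.
Proof. exact: ge0_muleDr. Qed.

Lemma dH_tri x y z : dH x z <= dH x y + dH y z.
Proof. exact: (gdist_tri Hwnn). Qed.

Lemma dH_edge x y : x \in C -> y \in C -> dH x y <= dt x y.
Proof.
move=> xC yC; apply: (le_trans (gdist_walk Hwnn (p := [:: y]) _ _)) => //=.
  by rewrite /H_edge xC yC.
by rewrite adde0.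
Qed.

Lemma pw_ge0 x p : 0 <= pw x p.
Proof. by elim: p x => [|y p IH] x //=; rewrite adde_ge0 ?natw_ge0. Qed.

Lemma window x p v : is_shortest E (natw w) x p v -> ((uphalf h).-1 <= size p)%N ->
  exists c q r2, [/\ c \in C, is_shortest E (natw w) c r2 v, (size r2 < uphalf h)%N,
    [/\ path E x q, last x q = c & (size q <= size p)%N] &
    pw x q + pw c r2 = pw x p].
Proof.
move=> sp szp.
have hT' := hT; set T := uphalf h in szp hT' *.
pose q1 := take (size p - T.-1) p; pose q2 := drop (size p - T.-1) p.
have pq : p = q1 ++ q2 by rewrite cat_take_drop.
have sq2 : size q2 = T.-1 by rewrite size_drop subKn.
move: sp; rewrite pq => sp.
have [sp1 sp2] := shortest_split sp.
set u := last x q1 in sp1 sp2.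
have [R [spR szR hasR]] : exists R, [/\ is_shortest E (natw w) u R v,
    (size R).+1 = T & has (fun x => x \in C) (u :: R)].
  apply: sk; exists q2; split => //; rewrite sq2 prednK //.
  by case/andP: hT'.
case/hasP: hasR => c cR cC.
case/splitPl: cR spR szR => r1 r2 lr1 spR szR.
have [spr1 spr2] := shortest_split spR.
rewrite lr1 in spr2.
exists c, (q1 ++ r1), r2; split => //.
- by rewrite -szR size_cat ltnS leq_addl.
split.
- case: sp1 => /and3P[pq1 _ _] _; case: spr1 => /and3P[pr1 _ _] _.
  by rewrite cat_path pq1 pr1.
- by rewrite last_cat.
- by rewrite !size_cat leq_add2l sq2 -szR /= size_cat leq_addr.
rewrite pweight_cat -addeA -lr1 -pweight_cat.
case: spR => _ ->; case: sp2 => _ <-.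
by rewrite -pweight_cat.
Qed.

Lemma Bbase x c p : x \in C -> c \in C -> is_shortest E (natw w) x p c ->
  (size p <= h)%N -> dH x c <= 2%:E * d x c.
Proof.
move=> xC cC [sp wp] hp.
apply: le_trans (dH_edge xC cC) _; apply: le_trans (dtb c xC).2 _.
by apply: mul2_le; rewrite -wp; apply: hdist_spath.
Qed.

Lemma Bmain m x c p : x \in C -> c \in C -> is_shortest E (natw w) x p c ->
  (size p <= m)%N -> dH x c <= 2%:E * d x c.
Proof.
elim: m x c p => [|m IH] x c p xC cC sp sz;
  (have [hp|hp] := leqP (size p) h); first exact: Bbase sp hp.
- by move: hp sz h1; lia.
- exact: Bbase sp hp.
move: sp sz hp; case/lastP: p => [|p' z] //.
rewrite size_rcons ltnS => sp szp' hp'.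
have lz : z = c by case: sp => /and3P[_ _ /eqP]; rewrite last_rcons.
rewrite -cats1 in sp.
have [sp1 sp2] := shortest_split sp.
set y := last x p' in sp1 sp2.
have hT' := hT.
have [c' [q [r2 [c'C spr2 szr2 [pq lq szq] wq]]]] := window sp1
   (leq_trans (leq_pred _) (leq_trans (proj2 (andP hT')) hp')).
case: (spr2) => /and3P[pr2 _ /eqP lr2] wr2.
case: (sp2) => /and3P[py _ /eqP ly] _.
have pr2z : path E c' (r2 ++ [:: z]) by rewrite cat_path pr2 lr2.
have lr2z : last c' (r2 ++ [:: z]) = c by rewrite last_cat lr2.
have wr2z : pw c' (r2 ++ [:: z]) = pw c' r2 + pw y [:: z]
  by rewrite pweight_cat lr2.
have dxc : d x c = pw x q + pw c' r2 + pw y [:: z].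
  by case: sp => _ <-; rewrite pweight_cat wq.
have hq : pw x q <= d x c'.
  have t1 : d x c <= d x c' + pw c' (r2 ++ [:: z]).
    exact: le_trans (gdist_tri Ew x c' c) (leeD2l _ (gdist_walk Ew pr2z lr2z)).
  rewrite dxc -addeA -wr2z in t1.
  by rewrite -(leeD2rE _ _ (pw_fin w c' (r2 ++ [:: z]))).
have [q' [pq' uq' lq' sq' wq']] := shortcut Ew pq.
have spq' : is_shortest E (natw w) x q' c'.
  split; first by rewrite /is_spath pq' uq' lq' lq eqxx.
  apply/le_anti; rewrite (le_trans wq' hq) /=.
  by apply: (gdist_walk Ew pq'); rewrite lq' lq.
have IHc := IH x c' q' xC c'C spq' (leq_trans sq' (leq_trans szq szp')).
have e1 : dH x c <= dH x c' + dt c' c.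
  by apply: le_trans (dH_tri x c' c) _; rewrite leeD2l // dH_edge.
have e2 : dt c' c <= 2%:E * pw c' (r2 ++ [:: z]).
  apply: le_trans (dtb c c'C).2 _; apply: mul2_le.
  apply: (hdist_walk Ew pr2z lr2z).
  by rewrite size_cat addn1; apply: leq_trans szr2 _; case/andP: hT'.
apply: le_trans e1 _; apply: le_trans (leeD IHc e2) _.
rewrite -mul2D ?d_ge0 ?pw_ge0 //; apply: mul2_le.
rewrite dxc wr2z addeA leeD2r //.
apply: leeD2r; exact: (gdist_walk Ew pq lq).
Qed.

Lemma Bfull x c : x \in C -> c \in C -> dH x c <= 2%:E * d x c.
Proof.
move=> xC cC; case: (hdist_wit E (natw w) #|V| x c) => [E1|[p [sp _ wp]]].
  by rewrite /gdist E1 mulry gtr0_sg // mul1e leey.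
exact: (@Bmain (size p) x c p xC cC (conj sp wp)).
Qed.

Local Notation Ge := (G'_edge E s C).
Local Notation Gw := (G'_weight E w s C dt).
Local Notation D' := (hdist Ge Gw h s).

Lemma ge0_nNy (a : \bar rat) : 0 <= a -> a != -oo.
Proof. by case: a. Qed.

Lemma dH_ge0 x y : 0 <= dH x y.
Proof. exact: (hdist_ge0 Hwnn). Qed.

Lemma mul2natw_ge0 a b : 0 <= 2%:E * natw w a b.
Proof. by rewrite mule_ge0 ?natw_ge0. Qed.

Lemma Gwnn x y : 0 <= Gw x y.
Proof.
rewrite /G'_weight; case: ifP => _; last exact: mul2natw_ge0.
case: ifP => _; last exact: dH_ge0.
by rewrite le_min dH_ge0 mul2natw_ge0.
Qed.

Lemma Gwnn' x y : Ge x y -> 0 <= Gw x y.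
Proof. by move=> _; apply: Gwnn. Qed.

Lemma Gw_le2 a b : E a b -> Gw a b <= 2%:E * natw w a b.
Proof.
move=> eab; rewrite /G'_weight; case: ifP => _ //.
by rewrite eab ge_min lexx orbT.
Qed.

Lemma Gw_sC y : y \in C -> Gw s y <= dH s y.
Proof.
move=> yC; rewrite /G'_weight eqxx yC /=.
by case: ifP => _ //; rewrite ge_min lexx.
Qed.

Lemma pwG_le a p : path E a p -> pweight Gw a p <= 2%:E * pw a p.
Proof.
elim: p a => [|y p IH] a /=; first by rewrite mule0.
move=> /andP[ay pp]; rewrite mul2D ?natw_ge0 ?pw_ge0 //.
exact: leeD (Gw_le2 ay) (IH y pp).
Qed.

Lemma path_sub a p : path E a p -> path Ge a p.
Proof. by apply: sub_path => x y exy; rewrite /G'_edge exy. Qed.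

Lemma LemF x v : x \in C -> D' v <= dH s x + 2%:E * d x v.
Proof.
move=> xC; case: (hdist_wit E (natw w) #|V| x v) => [E1|[p [sp _ wp]]].
  by rewrite /gdist E1 mulry gtr0_sg // mul1e addey ?leey // ge0_nNy ?dH_ge0.
have hT' := hT.
have {}wp : pw x p = d x v by [].
case: (sp) => /and3P[pp _ /eqP lp].
have [hp|hp] := ltnP (size p) h.
  apply: le_trans (hdist_walk Gwnn' (p := x :: p) _ _ _) _ => //=.
  - by rewrite /G'_edge eqxx xC orbT path_sub.
  by rewrite -wp; apply: leeD (Gw_sC xC) (pwG_le pp).
have [c [q [r2 [cC spr2 szr2 [pq lq szq] wq]]]] := window (conj sp wp)
   (leq_trans (leq_pred _) (leq_trans (proj2 (andP hT')) hp)).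
case: (spr2) => /and3P[pr2 _ /eqP lr2] _.
apply: le_trans (hdist_walk Gwnn' (p := c :: r2) _ _ _) _ => //=.
- by rewrite /G'_edge eqxx cC orbT path_sub.
- by apply: leq_trans szr2 _; case/andP: hT'.
apply: le_trans (leeD (Gw_sC cC) (pwG_le pr2)) _.
have e1 : dH s c <= dH s x + 2%:E * pw x q.
  apply: le_trans (dH_tri s x c) _; rewrite leeD2l //.
  apply: le_trans (Bfull xC cC) _; apply: mul2_le.
  exact: (gdist_walk Ew pq lq).
apply: le_trans (leeD2r _ e1) _.
by rewrite -addeA -mul2D ?pw_ge0 // wq wp.
Qed.

Lemma Hwalk_lb a p : path (H_edge C) a p -> d a (last a p) <= pweight dt a p.
Proof.
elim: p a => [|y p IH] a /=; first by move=> _; apply: hdist_self.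
move=> /andP[ay pp]; apply: le_trans (gdist_tri Ew a y _) _.
apply: leeD (IH y pp).
by case/andP: ay => aC _; apply: (dtb y aC).1.
Qed.

Lemma d_le_dH x y : d x y <= dH x y.
Proof.
apply: hdist_lb => p /and3P[pp _ /eqP lp] _.
by rewrite -lp; apply: Hwalk_lb.
Qed.

Lemma natw_le2 a b : natw w a b <= 2%:E * natw w a b.
Proof.
by rewrite /natw -EFinM lee_fin ler_peMl.
Qed.

Lemma d_le_natw a b : E a b -> d a b <= natw w a b.
Proof.
move=> eab; have := gdist_walk Ew (p := [:: b]) (u := a) (v := b).
by rewrite /= adde0 eab; apply.
Qed.

Lemma d_le_Gw a y : Ge a y -> d a y <= Gw a y.
Proof.
rewrite /G'_weight /G'_edge; case: ifP => [/andP[/eqP -> yC]|nsC].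
  move=> _; case: ifP => esy; last exact: d_le_dH.
  rewrite le_min d_le_dH /=.
  exact: le_trans (d_le_natw esy) (natw_le2 _ _).
rewrite orbF => eay.
exact: le_trans (d_le_natw eay) (natw_le2 _ _).
Qed.

Lemma Gwalk_lb a p : path Ge a p -> d a (last a p) <= pweight Gw a p.
Proof.
elim: p a => [|y p IH] a /=; first by move=> _; apply: hdist_self.
move=> /andP[ay pp]; apply: le_trans (gdist_tri Ew a y _) _.
exact: leeD (d_le_Gw ay) (IH y pp).
Qed.

Lemma Gpath_E a q : path Ge a q -> s \notin a :: q ->
  path E a q /\ pweight Gw a q = 2%:E * pw a q.
Proof.
elim: q a => [|b q IH] a /=; first by rewrite mule0.
move=> /andP[gab pq]; rewrite in_cons negb_or => /andP[sa sq].
have [pe we] := IH b pq sq.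
have eab : E a b by move: gab; rewrite /G'_edge eq_sym (negbTE sa) /= orbF.
rewrite eab pe; split => //.
rewrite we mul2D ?natw_ge0 ?pw_ge0 //.
by rewrite /G'_weight eq_sym (negbTE sa).
Qed.

Lemma Gw_cases y : Ge s y ->
  (y \in C /\ Gw s y = dH s y) \/ (E s y /\ Gw s y = 2%:E * natw w s y).
Proof.
rewrite /G'_weight /G'_edge eqxx /=.
case: (boolP (y \in C)) => yC /=; last by rewrite orbF => esy; right.
move=> _; case: ifP => esy; last by left.
by rewrite minEle; case: ifP => _; [left|right].
Qed.

Lemma final : (forall v, (2^-1)%:E * d s v <= dhat E w s C dt h v /\
                         dhat E w s C dt h v <= d s v) /\
  (forall u v, E u v -> dhat E w s C dt h v <= dhat E w s C dt h u + natw w u v).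
Proof.
have halfle (a b : \bar rat) : a <= b -> (2^-1)%:E * a <= (2^-1)%:E * b.
  by move=> ab; rewrite lee_pmul2l // lte_fin invr_gt0.
have half2 (a : \bar rat) : (2^-1)%:E * (2%:E * a) = a.
  by rewrite muleA -EFinM mulVf // mul1e.
have Ds v : D' v <= 2%:E * d s v.
  apply: le_trans (LemF v sC) _; rewrite -[X in _ <= X]add0e.
  by apply: leeD2r; apply: hdist_self.
split.
  move=> v; rewrite /dhat; split.
    apply: halfle; apply: hdist_lb => p /and3P[pp _ /eqP lp] _.
    by rewrite -lp; apply: Gwalk_lb.
  by rewrite -[X in _ <= X]half2; apply: halfle.
move=> u v euv; rewrite /dhat.
suff H : D' v <= D' u + 2%:E * natw w u v.
  apply: le_trans (halfle _ _ H) _.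
  by rewrite ge0_muleDr ?(hdist_ge0 Gwnn') ?mul2natw_ge0 // half2.
case: (hdist_wit Ge Gw h s u) => [E1|[p [sp szp wp]]].
  by rewrite E1 addye ?leey // ge0_nNy ?mul2natw_ge0.
rewrite -wp; case: p sp szp wp => [|y p1] sp szp _.
  case/and3P: sp => _ _ /eqP /= lu; subst u.
  rewrite /= add0e.
  apply: le_trans (hdist_walk Gwnn' (p := [:: v]) _ _ _) _ => //=.
  - by rewrite /G'_edge euv.
  by rewrite adde0; apply: Gw_le2.
case/and3P: sp => /= /andP[gsy pp1] us /eqP lu.
move: us => /andP[sn _].
have [pe we] := Gpath_E pp1 sn.
have pW : path E y (p1 ++ [:: v]) by rewrite cat_path pe lu /= euv.
have lW : last y (p1 ++ [:: v]) = v by rewrite last_cat.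
have wW : pw y (p1 ++ [:: v]) = pw y p1 + natw w u v
  by rewrite pweight_cat lu /= adde0.
rewrite we.
case: (Gw_cases gsy) => [[yC ->]|[esy ->]].
  apply: le_trans (LemF v yC) _; rewrite -addeA leeD2l //.
  rewrite -mul2D ?pw_ge0 ?natw_ge0 //; apply: mul2_le; rewrite -wW.
  exact: (gdist_walk Ew pW lW).
apply: le_trans (Ds v) _.
have h0 : 0 <= pw y p1 + natw w u v by rewrite adde_ge0 ?pw_ge0 ?natw_ge0.
rewrite -addeA -mul2D ?pw_ge0 ?natw_ge0 // -mul2D ?natw_ge0 //.
apply: mul2_le; rewrite -wW.
have pW' : path E s (y :: p1 ++ [:: v]) by rewrite /= esy pW.
exact: (gdist_walk Ew pW' lW).
Qed.
End Main.

Theorem mainTheorem3 (V : finType) (E : rel V) (w : V -> V -> nat) (s : V)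
  (h : nat) (C : {set V}) (dt : V -> V -> \bar rat) :
  (1 <= h <= #|V|)%N ->
  s \in C ->
  skeleton_ok E (natw w) h C ->
  (forall x v, x \in C ->
     gdist E (natw w) x v <= dt x v /\
     dt x v <= 2%:E * hdist E (natw w) h x v) ->
  (forall v, (2^-1)%:E * gdist E (natw w) s v <= dhat E w s C dt h v /\
             dhat E w s C dt h v <= gdist E (natw w) s v) /\
  (forall u v, E u v -> dhat E w s C dt h v <= dhat E w s C dt h u + natw w u v).
Proof.
move=> /andP[h1 _] sC sk dtb.
exact: final.
Qed.
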